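(* Let $D=(V,E;s,t)$, $N$ be as in the context, let $x\in\mathcal{C}(\widetilde\Gamma_D)$ and let $e\in N$. If there exists a maximum-cardinality family of $s$-$t$ paths pairwise disjoint on $N$ none of whose paths contains $e$, then $x(e)=0$.
   Context: $D=(V,E;s,t)$ is a directed network with unit arc capacities (parallel arcs allowed); $N\subseteq E$ is the set of private arcs (players), $M=E\setminus N$ public arcs; every $s$-$t$ path contains an arc of $N$ and every arc lies on some $s$-$t$ path. Two paths are disjoint on $N$ if they share no arc of $N$; $\sigma_N$ is the maximum number of $s$-$t$ paths pairwise disjoint on $N$. For $S\subseteq N$, $\gamma(S)$ is the maximum number of pairwise arc-disjoint $s$-$t$ paths in $D_S=(V,S\cup M;s,t)$. The auxiliary game $\widetilde\Gamma_D=(N,\tilde\gamma)$ has $\tilde\gamma(N)=\sigma_N$ and $\tilde\gamma(S)=\gamma(S)$ for $S\subsetneq N$; its core is $\mathcal{C}(\widetilde\Gamma_D)=\{x\in\mathbb{R}^N_{\ge0}:x(N)=\sigma_N,\ x(S)\ge\tilde\gamma(S)\ \forall S\subseteq N\}$, with $x(S)=\sum_{i\in S}x_i$. *)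

(* Defs.v *)
From HB Require Import structures.
From mathcomp Require Import all_boot all_order all_algebra.
Set Implicit Arguments. Unset Strict Implicit. Unset Printing Implicit Defensive.
Import Order.TTheory GRing.Theory Num.Theory.

(* A directed network with parallel arcs: vertices V, arcs E (a finite type,
   so parallel arcs are distinct elements), arc a goes from src a to tgt a.
   Unit capacities are implicit (each arc used at most once in arc-disjoint
   families). *)

Definition is_st_path {V E : finType} (src tgt : E -> V) (s t : V)
  (A : pred E) (p : seq E) : bool :=
  match p with
  | [::] => false
  | a :: q => [&& src a == s, tgt (last a q) == t,
                  path (fun b c => tgt b == src c) a q,
                  uniq (src a :: map tgt p) & all A p]
  end.

Definition disj_on {E : finType} (N : {set E}) (F : seq (seq E)) : bool :=
  pairwise (fun p q => ~~ has (fun a => (a \in N) && (a \in q)) p) F.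

Definition arc_disj {E : finType} (F : seq (seq E)) : bool :=
  pairwise (fun p q => ~~ has (fun a => a \in q) p) F.

Definition N_family {V E : finType} (src tgt : E -> V) (s t : V)
  (N : {set E}) (F : seq (seq E)) : bool :=
  all (is_st_path src tgt s t predT) F && disj_on N F.

Definition is_sigmaN {V E : finType} (src tgt : E -> V) (s t : V)
  (N : {set E}) (k : nat) : Prop :=
  (exists F, N_family src tgt s t N F /\ size F = k) /\
  (forall F, N_family src tgt s t N F -> size F <= k).

Definition S_family {V E : finType} (src tgt : E -> V) (s t : V)
  (N S : {set E}) (F : seq (seq E)) : bool :=
  all (is_st_path src tgt s t (fun a => (a \in S) || (a \notin N))) F
  && arc_disj F.

Definition is_gamma {V E : finType} (src tgt : E -> V) (s t : V)
  (N S : {set E}) (k : nat) : Prop :=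
  (exists F, S_family src tgt s t N S F /\ size F = k) /\
  (forall F, S_family src tgt s t N S F -> size F <= k).

Definition is_gtilde {V E : finType} (src tgt : E -> V) (s t : V)
  (N S : {set E}) (k : nat) : Prop :=
  if S == N then is_sigmaN src tgt s t N k else is_gamma src tgt s t N S k.

Definition network_ok {V E : finType} (src tgt : E -> V) (s t : V)
  (N : {set E}) : Prop :=
  (forall p, is_st_path src tgt s t predT p -> has (fun a => a \in N) p) /\
  (forall a : E, exists p, is_st_path src tgt s t predT p /\ a \in p).

(* core of the auxiliary game; x is given on all arcs but only its values
   on N matter *)
Definition in_core {R : realFieldType} {V E : finType} (src tgt : E -> V)
  (s t : V) (N : {set E}) (x : E -> R) : Prop :=
  [/\ (forall i, i \in N -> 0 <= x i),
      (forall k, is_sigmaN src tgt s t N k -> \sum_(i in N) x i = k%:R)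
    & (forall S : {set E}, S \subset N -> forall k,
         is_gtilde src tgt s t N S k -> k%:R <= \sum_(i in S) x i)]%R.

(* Main.v *)
Require Import Defs.
From HB Require Import structures.
From mathcomp Require Import all_boot all_order all_algebra.
From mathcomp Require Import zify.
From Stdlib Require Import Classical.
Import Order.TTheory GRing.Theory Num.Theory.

Lemma max_exists (P : nat -> Prop) m B : P m -> (forall k, P k -> k <= B) ->
  exists k, P k /\ m <= k /\ forall j, P j -> j <= k.
Proof.
move=> Pm HB.
have [d Hd] : exists d, B - m <= d by exists (B - m).
elim: d m Pm Hd => [|d IH] m Pm Hd.
  exists m; split=> //; split=> // j Pj.
  have := HB j Pj; lia.
case: (classic (exists j, P j /\ m < j)) => [[j [Pj ltmj]]|H].
  have hj := HB j Pj.
  have [k [Pk [ljk Hk]]] := IH j Pj ltac:(lia).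
  exists k; split=> //; split=> //; lia.
exists m; split=> //; split=> // j Pj.
case: (leqP j m) => // ltmj; exfalso; apply: H; by exists j.
Qed.

Lemma st_path_ne {V E : finType} (src tgt : E -> V) s t A p :
  is_st_path src tgt s t A p -> p != [::].
Proof. by case: p. Qed.

Lemma arc_disj_uniq {E : finType} (F : seq (seq E)) :
  all (fun p => p != [::]) F -> arc_disj F -> uniq (map ohead F).
Proof.
elim: F => //= p F IH /andP[np hF].
rewrite /arc_disj /= => /andP[hp hpF].
rewrite IH // andbT; apply/mapP => -[q qF eq].
have := allP hp q qF.
have := allP hF q qF.
case: p np eq {hp} => // a p' _; case: q qF => // b q' _ /= [->] _.
by rewrite inE eqxx.
Qed.

Lemma S_family_bound {V E : finType} (src tgt : E -> V) s t N S F :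
  S_family src tgt s t N S F -> size F <= #|{: option E}|.
Proof.
case/andP=> hall hd.
have hu : uniq (map ohead F).
  apply: arc_disj_uniq => //; apply/allP => p pF.
  exact: st_path_ne (allP hall p pF).
rewrite -(size_map ohead) -(card_uniqP hu); exact: max_card.
Qed.

Lemma st_path_weaken {V E : finType} (src tgt : E -> V) s t A B p :
  is_st_path src tgt s t A p -> all B p -> is_st_path src tgt s t B p.
Proof.
case: p => //= a q /and5P[-> -> -> -> _] /= hB; by rewrite hB.
Qed.

Arguments st_path_weaken {V E src tgt s t A B p}.
Arguments S_family_bound {V E src tgt s t N S F}.

Lemma sum_cover {R : realFieldType} {E : finType} (N : {set E}) (x : E -> R)
  (F : seq (seq E)) :
  (forall i, i \in N -> 0 <= x i)%R ->
  disj_on N F ->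
  (forall p, p \in F -> 1 <= \sum_(i in [set a in N | a \in p]) x i)%R ->
  forall A : {set E}, A \subset N ->
  (forall p a, p \in F -> a \in p -> a \in N -> a \in A) ->
  ((size F)%:R <= \sum_(i in A) x i)%R.
Proof.
move=> hx; elim: F => [|p F IH] hd hp A sAN hA /=.
  by apply: sumr_ge0 => i iA; apply: hx; apply: (subsetP sAN).
move: hd; rewrite /disj_on pairwise_cons => /andP[hpF hd].
rewrite (big_setID [set a in N | a \in p]) /=.
have -> : A :&: [set a in N | a \in p] = [set a in N | a \in p].
  apply/setP => a; rewrite !inE.
  case aN: (a \in N); case ap: (a \in p); rewrite ?andbF ?andbT //=.
  by apply: hA (mem_head _ _) _ _; rewrite ?ap ?aN.
idtac.
rewrite -add1n natrD; apply: lerD; first by apply: hp; rewrite mem_head.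
apply: IH => //.
- by move=> q qF; apply: hp; rewrite inE qF orbT.
- by apply: subset_trans sAN; apply: subsetDl.
move=> q a qF aq aN; rewrite !inE aN /= (hA q a) ?inE ?qF ?orbT // andbT.
apply/negP => ap.
have := allP hpF q qF; move/hasP; apply; exists a => //; by rewrite aN.
Qed.

Theorem lemma7 (R : realFieldType) (V E : finType) (src tgt : E -> V)
  (s t : V) (N : {set E}) (x : E -> R) (e : E) :
  network_ok src tgt s t N ->
  in_core src tgt s t N x ->
  e \in N ->
  (exists F : seq (seq E),
      [/\ N_family src tgt s t N F,
          (forall G, N_family src tgt s t N G -> size G <= size F)
        & all (fun p => e \notin p) F]) ->
  x e = 0%R.
Proof.
move=> _ [hx hsum hS] eN [F [hF hmax hall]].
have sig : is_sigmaN src tgt s t N (size F) by split; [exists F|].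
have hp : forall p, p \in F -> (1 <= \sum_(i in [set a in N | a \in p]) x i)%R.
  move=> p pF; set S := [set a in N | a \in p].
  have pst : is_st_path src tgt s t predT p := allP (andP hF).1 p pF.
  have Sfam : S_family src tgt s t N S [:: p].
    rewrite /S_family /= andbT (st_path_weaken pst) //.
    by apply/allP => a ap; rewrite inE ap andbT orbN.
  have [k [Pk [le1k Hk]]] := @max_exists
    (fun k => exists G, S_family src tgt s t N S G /\ size G = k) 1
    #|{: option E}| (ex_intro _ [:: p] (conj Sfam erefl))
    (fun k H => match H with ex_intro G (conj HG e) =>
       eq_ind _ (fun k => k <= _) (S_family_bound HG) _ e end).
  have gk : is_gtilde src tgt s t N S k.
    rewrite /is_gtilde ifN; last first.
      apply/eqP => SN; move: eN; rewrite -SN inE => /andP[_ ep].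
      by have := allP hall p pF; rewrite ep.
    by split => // G HG; apply: Hk; exists G.
  have sSN : S \subset N by apply/subsetP => a; rewrite inE => /andP[].
  have := hS S sSN k gk.
  apply: le_trans; by rewrite ler1n.
have hA : forall p a, p \in F -> a \in p -> a \in N -> a \in N :\ e.
  move=> p a pF ap aN; rewrite !inE aN andbT; apply/eqP => ae; subst a.
  by have := allP hall p pF; rewrite ap.
have hc := sum_cover N x F hx (andP hF).2 hp (N :\ e) (subsetDl N [set e]) hA.
have := hsum _ sig; rewrite (big_setD1 e eN) /= => H.
apply/eqP; rewrite eq_le hx // andbT.
by rewrite -(lerD2r (\sum_(i in N :\ e) x i)) add0r H.
Qed.
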